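(* Let $T$ be a complex torus, $\Gamma$ a finite subgroup of $\mathrm{Aut}(T)=\mathrm{Aut}_0(T)\ltimes t(T)$, $\mathbb T=T\setminus\Gamma\cdot\{0\}$, and $\pi:\mathbb T\to\mathbb T/\Gamma$ the canonical projection. Then the number of branch points of $\pi$ is $0$ if $\Gamma\subseteq t(T)$; $2$ if $\Gamma=C_\ell\ltimes1$ with $\ell\in\{3,4,6\}$, or $\Gamma=C_3\ltimes(C_2\times C_2)$; $3$ if $\Gamma=C_2\ltimes C_N$ ($N\ge1$).
   Context: $\mathrm{Aut}(T)$ is the group of biholomorphisms of $T$, $\mathrm{Aut}_0(T)$ the subgroup fixing $0$ (the maps $z\mapsto\epsilon z$ for roots of unity $\epsilon$ with $\epsilon\Lambda=\Lambda$, $T=\mathbb C/\Lambda$), and $t(T)$ the subgroup of translations. Writing $\Gamma=G\ltimes K$ means $G\subseteq\mathrm{Aut}_0(T)$, $K\subseteq t(T)$ and $\Gamma$ is generated by $G$ and $K$; $C_m$ denotes a cyclic group of order $m$ and $1$ the trivial group. A branch point of $\pi$ is the image of a point of $\mathbb T$ with nontrivial stabilizer in $\Gamma$. *)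

(* Defs.v *)
From HB Require Import structures.
From mathcomp Require Import all_boot all_order all_algebra.
From mathcomp Require Import complex.
From mathcomp Require Import boolp classical_sets cardinality reals.
Set Implicit Arguments. Unset Strict Implicit. Unset Printing Implicit Defensive.
Import Order.TTheory GRing.Theory Num.Theory.
Local Open Scope ring_scope.
Local Open Scope classical_set_scope.
Local Open Scope complex_scope.

Section Torus.
Variable R : realType.
Local Notation C := (R[i]).

(* The lattice Lambda = Z w1 + Z w2 (a genuine lattice when w1, w2 are
   R-linearly independent, see [is_lattice_basis]); T = C / Lambda. *)
Definition Lat (w1 w2 : C) : set C :=
  [set z | exists m n : int, z = m%:~R * w1 + n%:~R * w2].

Definition is_lattice_basis (w1 w2 : C) : Prop :=
  forall a b : R, a%:C * w1 + b%:C * w2 = 0 -> a = 0 /\ b = 0.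

(* eps gives an element z |-> eps z of Aut_0(T): a root of unity with
   eps Lambda = Lambda. *)
Definition in_Aut0 (w1 w2 : C) (eps : C) : Prop :=
  (exists n : nat, (0 < n)%N /\ eps ^+ n = 1) /\
  (fun z => eps * z) @` Lat w1 w2 = Lat w1 w2.

(* An element of Aut(T) = Aut_0(T) |x t(T) is represented by a pair
   (eps, b) acting by [z] |-> [eps z + b]; two pairs represent the same
   automorphism iff the eps agree and the b differ by a lattice vector.
   A subset of Aut(T) is represented by a set of pairs saturated for
   this relation. *)
Definition aut_sat (w1 w2 : C) (A : set (C * C)) : Prop :=
  forall e b b', A (e, b) -> Lat w1 w2 (b' - b) -> A (e, b').

Definition in_Aut (w1 w2 : C) (A : set (C * C)) : Prop :=
  forall e b, A (e, b) -> in_Aut0 w1 w2 e.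

(* subgroup of Aut(T): contains the identity, closed under composition
   (e1,b1) o (e2,b2) = (e1 e2, e1 b2 + b1) and under inverses. *)
Definition is_aut_subgroup (w1 w2 : C) (G : set (C * C)) : Prop :=
  [/\ in_Aut w1 w2 G, aut_sat w1 w2 G, G (1, 0),
      (forall e1 b1 e2 b2, G (e1, b1) -> G (e2, b2) ->
           G (e1 * e2, e1 * b2 + b1)) &
      (forall e b, G (e, b) -> G (e^-1, - (e^-1 * b)))].

Definition aut_finite (w1 w2 : C) (G : set (C * C)) : Prop :=
  exists (n : nat) (f : 'I_n -> C * C), forall p, G p ->
    exists i, (f i).1 = p.1 /\ Lat w1 w2 (p.2 - (f i).2).

Definition is_finite_aut_subgroup (w1 w2 : C) (G : set (C * C)) : Prop :=
  is_aut_subgroup w1 w2 G /\ aut_finite w1 w2 G.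

Definition generated_by (w1 w2 : C) (G A : set (C * C)) : Prop :=
  is_aut_subgroup w1 w2 G /\
  (forall e b, A (e, b) -> G (e, b)) /\
  (forall H, is_aut_subgroup w1 w2 H ->
     (forall e b, A (e, b) -> H (e, b)) -> forall p, G p -> H p).

Definition cyclic_Aut0_of_order (w1 w2 : C) (l : nat) (Gp : set (C * C)) :=
  exists eps : C, [/\ in_Aut0 w1 w2 eps, eps ^+ l = 1,
     (forall j : nat, (0 < j)%N -> (j < l)%N -> eps ^+ j != 1) &
     Gp = [set p | exists j : nat, p = (eps ^+ j, 0)]].

Definition cyclic_t_of_order (w1 w2 : C) (N : nat) (K : set (C * C)) :=
  exists k : C, [/\ Lat w1 w2 (N%:R * k),
     (forall j : nat, (0 < j)%N -> (j < N)%N -> ~ Lat w1 w2 (j%:R * k)) &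
     K = [set p | exists j : nat, p = (1, j%:R * k)]].

Definition klein_t (w1 w2 : C) (K : set (C * C)) :=
  exists k1 k2 : C,
    [/\ Lat w1 w2 (2%:R * k1), Lat w1 w2 (2%:R * k2),
        [/\ ~ Lat w1 w2 k1, ~ Lat w1 w2 k2 & ~ Lat w1 w2 (k1 - k2)] &
        K = [set p | exists a b : nat, p = (1, a%:R * k1 + b%:R * k2)]].

(* Gamma = G |x K : Gamma generated by G (in Aut_0) and K (in t(T)) *)
Definition semidirect_is (w1 w2 : C) (Gam Gp K : set (C * C)) : Prop :=
  generated_by w1 w2 Gam (Gp `|` K).

(* Gamma-orbit of [z] in T, as a Lambda-saturated subset of C *)
Definition orbitC (G : set (C * C)) (z : C) : set C :=
  [set w | exists e b, G (e, b) /\ w = e * z + b].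

Definition nontriv_stab (w1 w2 : C) (G : set (C * C)) (z : C) : Prop :=
  exists e b, [/\ G (e, b), ~ (e = 1 /\ Lat w1 w2 b) &
                  Lat w1 w2 (e * z + b - z)].

(* branch points of pi : TT -> TT / Gamma, TT = T \ Gamma.{0}: the images
   (Gamma-orbits) of points of TT with nontrivial stabilizer *)
Definition branch_points (w1 w2 : C) (G : set (C * C)) : set (set C) :=
  [set O | exists z, [/\ ~ orbitC G 0 z, nontriv_stab w1 w2 G z &
                         O = orbitC G z]].

Definition num_branch_points (w1 w2 : C) (G : set (C * C)) (n : nat) : Prop :=
  card_eq (branch_points w1 w2 G) [set: 'I_n].

End Torus.

(* Main.v *)
Require Import Defs.
From HB Require Import structures.
From mathcomp Require Import all_boot all_order all_algebra.
From mathcomp Require Import complex.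
From mathcomp Require Import boolp classical_sets cardinality reals.
From mathcomp Require Import zify ring lra.
Import Order.TTheory GRing.Theory Num.Theory.
Local Open Scope ring_scope.
Local Open Scope classical_set_scope.

Set Implicit Arguments. Unset Strict Implicit. Unset Printing Implicit Defensive.

Section A.
Local Open Scope complex_scope.
Variable R : realType.
Local Notation C := (R[i]).

Lemma Lat0 (u1 u2 : C) : Lat u1 u2 0.
Proof. by exists 0, 0; rewrite !mul0r addr0. Qed.

Lemma LatB (u1 u2 z w : C) : Lat u1 u2 z -> Lat u1 u2 w -> Lat u1 u2 (z - w).
Proof.
move=> [m [n ->]] [m' [n' ->]]; exists (m - m'), (n - n').
rewrite !intrB; ring.
Qed.

Lemma LatN (u1 u2 z : C) : Lat u1 u2 z -> Lat u1 u2 (- z).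
Proof. by move=> h; rewrite -sub0r; apply: LatB => //; apply: Lat0. Qed.

Lemma LatD (u1 u2 z w : C) : Lat u1 u2 z -> Lat u1 u2 w -> Lat u1 u2 (z + w).
Proof. by move=> h1 h2; rewrite -[w]opprK; apply: LatB => //; apply: LatN. Qed.

Lemma LatZ (u1 u2 : C) (m : int) (z : C) : Lat u1 u2 z -> Lat u1 u2 (m%:~R * z).
Proof.
move=> [a [b ->]]; exists (m * a), (m * b); rewrite !intrM; ring.
Qed.

Lemma Lat_u1 (u1 u2 : C) : Lat u1 u2 u1.
Proof. by exists 1, 0; rewrite mul1r mul0r addr0. Qed.
Lemma Lat_u2 (u1 u2 : C) : Lat u1 u2 u2.
Proof. by exists 0, 1; rewrite mul1r mul0r add0r. Qed.

Lemma Lat_sub (u1 u2 v1 v2 : C) : Lat v1 v2 u1 -> Lat v1 v2 u2 ->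
  forall z, Lat u1 u2 z -> Lat v1 v2 z.
Proof.
move=> h1 h2 z [m [n ->]]; apply: LatD; exact: LatZ.
Qed.

Lemma Lat_eq (u1 u2 v1 v2 : C) : Lat v1 v2 u1 -> Lat v1 v2 u2 ->
  Lat u1 u2 v1 -> Lat u1 u2 v2 -> Lat u1 u2 = Lat v1 v2.
Proof.
move=> h1 h2 h3 h4; rewrite predeqE => z; split; exact: Lat_sub.
Qed.

Lemma Lat_mul (u1 u2 e : C) : Lat u1 u2 (e * u1) -> Lat u1 u2 (e * u2) ->
  forall z, Lat u1 u2 z -> Lat u1 u2 (e * z).
Proof.
move=> h1 h2 z [m [n ->]]; rewrite mulrDr !mulrA ![e * _%:~R]mulrC -!mulrA.
apply: LatD; exact: LatZ.
Qed.

Lemma Cint (m : int) : (m%:~R : R)%:C = m%:~R.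
Proof. exact: (rmorph_int (real_complex R)). Qed.

Definition lpt (u1 u2 : C) (D : nat) (x y : int) : C :=
  x%:~R / D%:R * u1 + y%:~R / D%:R * u2.

Lemma lpt_sub (u1 u2 : C) D x y x' y' :
  lpt u1 u2 D x y - lpt u1 u2 D x' y' = lpt u1 u2 D (x - x') (y - y').
Proof. rewrite /lpt !intrB; ring. Qed.

Lemma basis_uniq (u1 u2 : C) (a b a' b' : R) : is_lattice_basis u1 u2 ->
  a%:C * u1 + b%:C * u2 = a'%:C * u1 + b'%:C * u2 -> a = a' /\ b = b'.
Proof.
move=> hb e.
have [h1 h2] : a - a' = 0 /\ b - b' = 0.
  by apply: hb; rewrite !rmorphB /= !mulrBl addrACA e -opprD subrr.
by split; apply/eqP; rewrite -subr_eq0; apply/eqP.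
Qed.

Lemma lpt_in (u1 u2 : C) (D : nat) x y : is_lattice_basis u1 u2 -> (0 < D)%N ->
  Lat u1 u2 (lpt u1 u2 D x y) <-> ((D%:Z %| x)%Z /\ (D%:Z %| y)%Z).
Proof.
move=> hb hD; have DC : (D%:R : C) != 0 by rewrite pnatr_eq0 -lt0n.
have DR : (D%:R : R) != 0 by rewrite pnatr_eq0 -lt0n.
split.
  move=> [m [n e]].
  have := @basis_uniq u1 u2 (x%:~R / D%:R) (y%:~R / D%:R) m%:~R n%:~R hb.
  rewrite !Cint !fmorph_div /= !Cint !rmorph_nat.
  move=> /(_ e) [ex ey].
  have hx : x = D%:Z * m.
    apply: (@intr_inj R); rewrite intrM -ex /=.
    by rewrite [(D%:Z)%:~R]/= mulrC divfK.
  have hy : y = D%:Z * n.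
    apply: (@intr_inj R); rewrite intrM -ey /=.
    by rewrite mulrC divfK.
  by rewrite hx hy !dvdz_mulr.
move=> [/dvdzP [m ->] /dvdzP [n ->]]; exists m, n.
rewrite /lpt !intrM /=.
by rewrite !(mulfK DC).
Qed.
End A.

Section B.
Local Open Scope complex_scope.
Variable R : realType.
Local Notation C := (R[i]).

Definition sqn (z : C) : R := let: a +i* b := z in a ^+ 2 + b ^+ 2.

Lemma sqnM (x y : C) : sqn (x * y) = sqn x * sqn y.
Proof. by case: x => a b; case: y => c d; rewrite /sqn /=; ring. Qed.

Lemma sqn_ge0 (z : C) : 0 <= sqn z.
Proof. by case: z => a b; rewrite /sqn addr_ge0 // sqr_ge0. Qed.

Lemma sqn_eq0 (z : C) : sqn z = 0 -> z = 0.
Proof.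
case: z => a b; rewrite /sqn => h.
have ha : a = 0 by nra.
have hb : b = 0 by nra.
by rewrite ha hb.
Qed.

Lemma eps_coords (e : C) (c : int) : (-1 <= c <= 1)%R -> e ^+ 2 = c%:~R * e - 1 ->
  [/\ complex.Re e = c%:~R / 2, complex.Im e ^+ 2 = 1 - c%:~R ^+ 2 / 4 & complex.Im e != 0].
Proof.
move=> /andP [hc1 hc2].
have h1 : (((-1 : int)%:~R : R) <= c%:~R) by rewrite ler_int.
have h2 : ((c%:~R : R) <= (1 : int)%:~R) by rewrite ler_int.
rewrite intrN mulr1z in h1; rewrite mulr1z in h2.
have hc' : (-1 <= (c%:~R : R) <= 1)%R by rewrite h1 h2.
case: e => a b; rewrite -Cint expr2; simpc; move=> [e1 e2] /=.
have hb : b != 0.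
  apply/eqP => b0; move: e1; rewrite b0 => e1.
  move/andP: hc' => [hr1 hr2].
  have := sqr_ge0 (2 * a - c%:~R); have : 0 <= (1 - c%:~R) * (1 + c%:~R :> R) by apply: mulr_ge0; lra.
  nra.
have ha : a = c%:~R / 2.
  have hh : b * (2 * a - c%:~R) = 0 by rewrite mulrBr [b * c%:~R]mulrC -e2; ring.
  move/eqP: hh; rewrite mulf_eq0 (negbTE hb) /= subr_eq0 => /eqP h; lra.
split => //; move: e1; rewrite ha => e1; lra.
Qed.
End B.

Section B3.
Local Open Scope complex_scope.
Variable R : realType.
Local Notation C := (R[i]).

Lemma decomp (e : C) : complex.Im e != 0 -> forall z : C, exists s t : R, z = s%:C + t%:C * e.
Proof.
case: e => a b /= hb [x y]; exists (x - y / b * a), (y / b).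
simpc; apply/eqP; rewrite eq_complex /=; apply/andP; split; apply/eqP; field => //.
Qed.

Lemma sqn_st (e : C) (c s t : R) : complex.Re e = c / 2 -> complex.Im e ^+ 2 = 1 - c ^+ 2 / 4 ->
  sqn (s%:C + t%:C * e) = s ^+ 2 + c * s * t + t ^+ 2.
Proof.
case: e => a b /= ha hb; rewrite /sqn /= ha.
have -> : (0 + (t * b + 0 * (c / 2))) ^+ 2 = t ^+ 2 * b ^+ 2 by ring.
by rewrite hb; field.
Qed.

Lemma ex_min_nat (P : nat -> Prop) : (exists n, P n) -> exists n, P n /\ forall k, P k -> (n <= k)%N.
Proof.
move=> [n0 h0].
have hex : exists n, `[< P n >] by exists n0; apply/asboolP.
case: (ex_minnP hex) => n /asboolP Pn hmin; exists n; split => // k Pk.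
by apply: hmin; apply/asboolP.
Qed.

Lemma CintR (m : int) : (m%:~R : C) = (m%:~R : R)%:C.
Proof. by rewrite Cint. Qed.

Lemma zbasis (w1 w2 e : C) (c : int) : (-1 <= c <= 1)%R -> e ^+ 2 = c%:~R * e - 1 ->
  is_lattice_basis w1 w2 -> (forall z, Lat w1 w2 z -> Lat w1 w2 (e * z)) ->
  exists v, v != 0 /\ Lat w1 w2 = Lat v (e * v).
Proof.
move=> hc he hb hL.
have [hRe hIm2 hIm] := eps_coords hc he.
have w10 : w1 != 0.
  apply/eqP => w0; have [] := hb 1 0.
    by rewrite w0 mulr0 rmorph0 mul0r addr0.
  by move/eqP; rewrite oner_eq0.
have [p [q hpq]] := hL w1 (Lat_u1 w1 w2).
have q0 : q != 0.
  apply/eqP => q0; move: hpq; rewrite q0 mul0r addr0 => /eqP.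
  rewrite -subr_eq0 -mulrBl mulf_eq0 (negbTE w10) orbF subr_eq0 => /eqP ep.
  by move: hIm; rewrite ep CintR /= eqxx.
pose F (m n : int) := (m * q - n * p) ^+ 2 + c * (m * q - n * p) * n + n ^+ 2.
have hc3 : c = -1 \/ c = 0 \/ c = 1 by lia.
have Fge0 : forall m n, 0 <= F m n.
  by move=> m n; rewrite /F; move: (m * q - n * p) => X; case: hc3 => [->|[->|->]]; nia.
have Feq0 : forall m n, F m n = 0 -> m = 0 /\ n = 0.
  move=> m n; rewrite /F => h.
  have [h1 h2] : m * q - n * p = 0 /\ n = 0.
    by move: (m * q - n * p) h => X; case: hc3 => [->|[->|->]] h; nia.
  split => //; move: h1; rewrite h2 mul0r subr0 => /eqP; rewrite mulf_eq0 (negbTE q0) orbF.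
  by move/eqP.
have key : forall m n : int, sqn (q%:~R) * sqn (m%:~R * w1 + n%:~R * w2) = sqn w1 * (F m n)%:~R.
  move=> m n; rewrite -sqnM.
  have -> : (q%:~R : C) * (m%:~R * w1 + n%:~R * w2) = ((m * q - n * p)%:~R + n%:~R * e) * w1.
    rewrite intrB !intrM; ring: hpq.
  rewrite sqnM mulrC; congr (_ * _).
  rewrite !CintR (sqn_st _ _ hRe hIm2) /F.
  by rewrite !(intrD, intrM, intrB, rmorphXn) /=.
have sq0 : 0 < sqn (q%:~R : C).
  rewrite lt_def sqn_ge0 andbT; apply/eqP => /sqn_eq0 /eqP; by rewrite intr_eq0 (negbTE q0).
pose P k := exists m n : int, ((m != 0) || (n != 0)) /\ `|F m n|%N = k.
have [k0 [[m0 [n0 [mn0 hk0]]] hmin]] : exists k0, P k0 /\ forall k, P k -> (k0 <= k)%N.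
  by apply: ex_min_nat; exists `|F 1 0|%N, 1, 0.
pose v := m0%:~R * w1 + n0%:~R * w2.
have v0 : v != 0.
  apply/eqP => hv; move: mn0.
  have [] := hb (m0%:~R) (n0%:~R); first by rewrite -!CintR.
  by move=> /eqP; rewrite intr_eq0 => /eqP -> /eqP; rewrite intr_eq0 => /eqP ->.
have vmin : forall z, Lat w1 w2 z -> z != 0 -> sqn v <= sqn z.
  move=> z [m [n ->]] z0.
  have mn : (m != 0) || (n != 0).
    apply/negPn/negP => /norP [/negPn/eqP mz /negPn/eqP nz]; move: z0.
    by rewrite mz nz !mul0r addr0 eqxx.
  have := hmin _ (ex_intro _ m (ex_intro _ n (conj mn erefl))).
  rewrite -hk0 => hle.
  have hle' : F m0 n0 <= F m n.
    by rewrite -(gez0_abs (Fge0 m0 n0)) -(gez0_abs (Fge0 m n)) lez_nat.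
  rewrite -(ler_pM2l sq0) key key; apply: ler_wpM2l; first exact: sqn_ge0.
  by rewrite ler_int.
exists v; split => //.
rewrite predeqE => z; split; last first.
  apply: Lat_sub; first by apply: LatD; apply: LatZ; [apply: Lat_u1|apply: Lat_u2].
  by apply: hL; apply: LatD; apply: LatZ; [apply: Lat_u1|apply: Lat_u2].
move=> hz.
have [s [t hst]] := decomp hIm (z / v).
pose x := Num.floor (s + 1 / 2); pose y := Num.floor (t + 1 / 2).
have [hx1 hx2] : x%:~R <= s + 1/2 /\ s + 1/2 < (x + 1)%:~R.
  by split; [apply: floor_le|apply: floorD1_gt].
have [hy1 hy2] : y%:~R <= t + 1/2 /\ t + 1/2 < (y + 1)%:~R.
  by split; [apply: floor_le|apply: floorD1_gt].
rewrite intrD mulr1z in hx2; rewrite intrD mulr1z in hy2.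
pose r := z - (x%:~R * v + y%:~R * (e * v)).
have vL : Lat w1 w2 v by apply: LatD; apply: LatZ; [apply: Lat_u1|apply: Lat_u2].
have rL : Lat w1 w2 r.
  by apply: LatB => //; apply: LatD; apply: LatZ => //; apply: hL.
have hr : r = ((s - x%:~R)%:C + (t - y%:~R)%:C * e) * v.
  have hz' : z = (s%:C + t%:C * e) * v by rewrite -hst divfK.
  by rewrite /r hz' !rmorphB /= -!CintR; ring.
have sr : sqn r <= 3 / 4 * sqn v.
  rewrite hr sqnM; apply: ler_wpM2r; first exact: sqn_ge0.
  rewrite (sqn_st _ _ hRe hIm2).
  set u := s - x%:~R; set w := t - y%:~R.
  have hu1 : - (1/2) <= u by rewrite /u; lra.
  have hu2 : u < 1/2 by rewrite /u; lra.
  have hw1 : - (1/2) <= w by rewrite /w; lra.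
  have hw2 : w < 1/2 by rewrite /w; lra.
  case: hc3 => [->|[->|->]]; rewrite ?intrN /= ?mulr1z; nra.
have sv0 : 0 < sqn v.
  rewrite lt_def sqn_ge0 andbT; apply/eqP => /sqn_eq0 /eqP; by rewrite (negbTE v0).
have r0 : r = 0.
  apply/eqP; apply: contraT => rn0.
  have := vmin r rL rn0; lra.
exists x, y; move/eqP: r0; rewrite subr_eq0 => /eqP ->.
by rewrite mulrA.
Qed.
End B3.

Section F.
Local Open Scope complex_scope.
Variable R : realType.
Local Notation C := (R[i]).

Lemma aut0_nz (w1 w2 e : C) : in_Aut0 w1 w2 e -> e != 0.
Proof.
move=> [[n [n0 hn]] _]; apply/eqP => e0; move: hn; rewrite e0 expr0n.
by case: n n0 => // n _ /= /eqP; rewrite eq_sym oner_eq0.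
Qed.

Lemma aut_nz (w1 w2 : C) G e b : is_aut_subgroup w1 w2 G -> G (e, b) -> e != 0.
Proof. by case=> hA _ _ _ _ /hA; apply: aut0_nz. Qed.

Lemma orbit_trans (w1 w2 : C) G (z w : C) : is_aut_subgroup w1 w2 G ->
  orbitC G z w -> orbitC G w = orbitC G z.
Proof.
move=> hG [e [b [Geb ->]]]; have [hA hS h1 hM hI] := hG.
have e0 := aut_nz hG Geb.
rewrite predeqE => y; split.
  move=> [e' [b' [G' ->]]]; exists (e' * e), (e' * b + b'); split; first exact: hM.
  ring.
move=> [e' [b' [G' ->]]]; exists (e' * e^-1), (e' * (- (e^-1 * b)) + b'); split.
  by apply: hM => //; apply: hI.
by field.
Qed.

Lemma GC (w1 w2 : C) G (E : C -> Prop) (M : set C) n (p : 'I_n -> C) :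
  is_aut_subgroup w1 w2 G ->
  (forall e b, G (e, b) <-> E e /\ M b) ->
  (forall z, Lat w1 w2 z -> M z) ->
  (forall x y, M x -> M y -> M (x - y)) ->
  (forall i, ~ M (p i) /\ exists e, [/\ E e, e != 1 & M ((1 - e) * p i)]) ->
  (forall z, ~ M z -> (exists e, [/\ E e, e != 1 & M ((1 - e) * z)]) ->
     exists i e, E e /\ M (z - e * p i)) ->
  (forall i j e, E e -> M (p j - e * p i) -> i = j) ->
  num_branch_points w1 w2 G n.
Proof.
move=> hG hGE hL hB ha hb hc.
have [hA hS h1 hM hI] := hG.
have M0 : M 0 by apply: hL; apply: Lat0.
have E1 : E 1 by have /hGE [] := h1.
have orb0 : forall z, orbitC G 0 z <-> M z.
  move=> z; split.
    by move=> [e [b [/hGE [_ Mb] ->]]]; rewrite mulr0 add0r.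
  by move=> Mz; exists 1, z; split; [apply/hGE|rewrite mulr0 add0r].
have nts : forall z, nontriv_stab w1 w2 G z <-> exists e, [/\ E e, e != 1 & M ((1 - e) * z)].
  move=> z; split.
    move=> [e [b [/hGE [Ee Mb] hn hl]]]; exists e; split => //.
      apply/eqP => e1; apply: hn; split => //; move: hl; rewrite e1 mul1r.
      by rewrite addrC addKr.
    have -> : (1 - e) * z = b - (e * z + b - z) by ring.
    by apply: hB => //; apply: hL.
  move=> [e [Ee ne1 hMe]]; exists e, ((1 - e) * z); split.
  - by apply/hGE.
  - by move=> [/eqP]; rewrite (negbTE ne1).
  - have -> : e * z + (1 - e) * z - z = 0 by ring.
    exact: Lat0.
have BP : branch_points w1 w2 G = (fun i => orbitC G (p i)) @` setT.
  rewrite predeqE => O; split.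
    move=> [z [n0 /nts hz ->]].
    have nMz : ~ M z by move=> Mz; apply: n0; apply/orb0.
    have [i [e [Ee hMe]]] := hb z nMz hz.
    exists i => //; symmetry; apply: (orbit_trans (w1:=w1) (w2:=w2)) => //.
    exists e, (z - e * p i); split; first by apply/hGE.
    by rewrite addrC subrK.
  move=> [i _ <-]; exists (p i); split => //.
    by move=> /orb0; have [] := ha i.
  by apply/nts; have [] := ha i.
rewrite /num_branch_points BP; apply: inj_card_eq => i j _ _ hij.
have : orbitC G (p i) (p j).
  by rewrite hij; exists 1, 0; rewrite mul1r addr0.
move=> [e [b [/hGE [Ee Mb] hpj]]].
apply: (hc i j e Ee); rewrite hpj.
by have -> : e * p i + b - e * p i = b by ring.
Qed.

Definition Sg (e : C) (M : set C) : set (C * C) :=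
  [set p | (exists j : nat, p.1 = e ^+ j) /\ M p.2].

Lemma in_Aut0_exp (w1 w2 e : C) j : in_Aut0 w1 w2 e -> in_Aut0 w1 w2 (e ^+ j).
Proof.
move=> he; have [[n [n0 hn]] him] := he.
have fw : forall z, Lat w1 w2 z -> Lat w1 w2 (e * z).
  by move=> z hz; rewrite -him; exists z.
have bw : forall z, Lat w1 w2 z -> exists y, Lat w1 w2 y /\ e * y = z.
  by move=> z; rewrite -{1}him => -[y hy <-]; exists y.
split.
  by exists n; split => //; rewrite -exprM mulnC exprM hn expr1n.
have fwj : forall z, Lat w1 w2 z -> Lat w1 w2 (e ^+ j * z).
  elim: j => [|j IH] z hz; first by rewrite expr0 mul1r.
  by rewrite exprS -mulrA; apply: fw; apply: IH.
have bwj : forall z, Lat w1 w2 z -> exists y, Lat w1 w2 y /\ e ^+ j * y = z.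
  elim: j {fwj} => [|j IH] z hz; first by exists z; rewrite expr0 mul1r.
  have [y [hy <-]] := bw z hz; have [y' [hy' <-]] := IH y hy.
  by exists y'; rewrite exprS mulrA.
rewrite predeqE => z; split; first by move=> [y hy <-]; apply: fwj.
by move=> /bwj [y [hy <-]]; exists y.
Qed.

Lemma Sg_subgroup (w1 w2 e : C) (M : set C) : in_Aut0 w1 w2 e ->
  (forall z, Lat w1 w2 z -> M z) -> (forall x y, M x -> M y -> M (x - y)) ->
  (forall x, M x -> M (e * x)) -> is_aut_subgroup w1 w2 (Sg e M).
Proof.
move=> he hL hB hE.
have M0 : M 0 by apply: hL; apply: Lat0.
have MN : forall x, M x -> M (- x) by move=> x hx; rewrite -sub0r; apply: hB.
have MD : forall x y, M x -> M y -> M (x + y).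
  by move=> x y hx hy; rewrite -[y]opprK; apply: hB => //; apply: MN.
have MEj : forall j x, M x -> M (e ^+ j * x).
  elim=> [|j IH] x hx; first by rewrite expr0 mul1r.
  by rewrite exprS -mulrA; apply: hE; apply: IH.
have [[n [n0 hn]] _] := he.
split.
- by move=> e' b [[j /= ->] _]; apply: in_Aut0_exp.
- move=> e' b b' [hj Mb] hl; split => //=.
  by rewrite -(subrK b b'); apply: MD => //; apply: hL.
- by split; [exists 0%N; rewrite expr0|].
- move=> e1 b1 e2 b2 [[i /= ->] M1] [[j /= ->] M2]; split => /=.
    by exists (i + j)%N; rewrite exprD.
  by apply: MD => //; apply: MEj.
- move=> e' b [[j /= ->] Mb]; split => /=.
    exists (j * n.-1)%N; apply: mulr1_eq.
    by rewrite -exprD -{1}(muln1 j) -mulnDr add1n prednK // mulnC exprM hn expr1n.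
  apply: MN; have -> : (e ^+ j)^-1 = e ^+ (j * n.-1).
    apply: mulr1_eq.
    by rewrite -exprD -{1}(muln1 j) -mulnDr add1n prednK // mulnC exprM hn expr1n.
  by apply: MEj.
Qed.

Lemma Sg_eq (w1 w2 : C) G A e M :
  generated_by w1 w2 G A -> (forall e' b, A (e', b) -> Sg e M (e', b)) ->
  is_aut_subgroup w1 w2 (Sg e M) -> (forall p, Sg e M p -> G p) ->
  forall e' b, G (e', b) <-> (exists j : nat, e' = e ^+ j) /\ M b.
Proof.
move=> [hG [hAG hmin]] hAS hS hSG e' b; split.
  by move=> /(hmin _ hS hAS).
by move=> h; apply: hSG.
Qed.

Lemma tr_add (w1 w2 : C) G a b : is_aut_subgroup w1 w2 G -> G (1, a) -> G (1, b) -> G (1, a + b).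
Proof. by case=> _ _ _ hM _ ha hb; have := hM _ _ _ _ ha hb; rewrite mul1r mul1r addrC. Qed.

Lemma tr_opp (w1 w2 : C) G a : is_aut_subgroup w1 w2 G -> G (1, a) -> G (1, - a).
Proof. by case=> _ _ _ _ hI ha; have := hI _ _ ha; rewrite invr1 mul1r. Qed.

Lemma tr_int (w1 w2 : C) G a : is_aut_subgroup w1 w2 G -> G (1, a) ->
  forall m : int, G (1, m%:~R * a).
Proof.
move=> hG ha.
have hnat : forall k : nat, G (1, k%:R * a).
  elim=> [|k IH]; first by rewrite mul0r; case: hG.
  by rewrite -addn1 natrD mulrDl mul1r; exact: (tr_add hG IH ha).
case=> k; first exact: hnat.
by rewrite NegzE intrN mulNr; apply: (tr_opp hG); exact: (hnat k.+1).
Qed.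

Lemma tr_lat (w1 w2 : C) G z : is_aut_subgroup w1 w2 G -> Lat w1 w2 z -> G (1, z).
Proof. by case=> _ hS h1 _ _ hz; apply: (hS _ _ _ h1); rewrite subr0. Qed.

Lemma tr_rot (w1 w2 : C) G e a : is_aut_subgroup w1 w2 G -> G (e, 0) -> G (1, a) -> G (1, e * a).
Proof.
move=> hG he ha; have [_ _ _ hM hI] := hG.
have e0 := aut_nz hG he.
have h1 := hM _ _ _ _ he ha.
have h2 := hM _ _ _ _ h1 (hI _ _ he).
by move: h2; rewrite mulr1 mulfV // mulr0 oppr0 mulr0 addr0 add0r.
Qed.

Lemma Sg_in (w1 w2 : C) G e M : is_aut_subgroup w1 w2 G -> G (e, 0) ->
  (forall b, M b -> G (1, b)) -> forall p, Sg e M p -> G p.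
Proof.
move=> hG he hMG [e' b] [[j /= ->] Mb] /=.
have [_ _ h1 hM _] := hG.
have hj : G (e ^+ j, 0).
  elim: j => [|j IH]; first by rewrite expr0.
  by have := hM _ _ _ _ he IH; rewrite mulr0 addr0 -exprS.
by have := hM _ _ _ _ (hMG _ Mb) hj; rewrite mul1r mulr0 add0r.
Qed.

End F.

Section EL.
Local Open Scope complex_scope.
Variable R : realType.
Local Notation C := (R[i]).
Variables (e v : C) (c : int).
Hypothesis he : e ^+ 2 = c%:~R * e - 1.
Hypothesis hc : (-1 <= c <= 1)%R.
Hypothesis v0 : v != 0.

Definition ipt x y := lpt v (e * v) 12 x y.

Lemma basis_ev : is_lattice_basis v (e * v).
Proof.
have [_ _ hIm] := eps_coords hc he.
move=> a b h.
have h2 : (a%:C + b%:C * e) * v = 0 by rewrite -h; ring.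
move/eqP: h2; rewrite mulf_eq0 (negbTE v0) orbF.
move: hIm; case: e => x y /= hy; simpc; rewrite eq_complex /= => /andP [/eqP h1 h3].
have hb : b = 0.
  by move: h3; rewrite mulf_eq0 (negbTE hy) orbF => /eqP.
by split => //; move: h1; rewrite hb mul0r addr0.
Qed.

Lemma ipt_in x y : Lat v (e * v) (ipt x y) <-> ((12 %| x)%Z /\ (12 %| y)%Z).
Proof. exact: (lpt_in _ _ basis_ev). Qed.

Lemma ipt12 x y : 12%:R * ipt x y = x%:~R * v + y%:~R * (e * v).
Proof.
have h12 : (12%:R : C) != 0 by rewrite pnatr_eq0.
by rewrite /ipt /lpt; field.
Qed.

Lemma ipt_inj x y z : 12%:R * z = x%:~R * v + y%:~R * (e * v) -> z = ipt x y.
Proof.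
have h12 : (12%:R : C) != 0 by rewrite pnatr_eq0.
by move=> h; apply: (mulfI h12); rewrite ipt12.
Qed.

Lemma ipt_mul (a b x y : int) :
  (a%:~R + b%:~R * e) * ipt x y = ipt (a * x - b * y) (a * y + b * x + c * b * y).
Proof.
apply: ipt_inj; rewrite mulrCA ipt12.
rewrite !(intrD, intrB, intrM); ring: he.
Qed.

Lemma ipt_subE x y x' y' : ipt x y - ipt x' y' = ipt (x - x') (y - y').
Proof. exact: lpt_sub. Qed.

Lemma Lev_mul (a b : int) z : Lat v (e * v) z -> Lat v (e * v) ((a%:~R + b%:~R * e) * z).
Proof.
have hev : forall z, Lat v (e * v) z -> Lat v (e * v) (e * z).
  apply: Lat_mul; first exact: Lat_u2.
  exists (-1), c; rewrite mulrA -expr2 he; rewrite intrN mulr1z; ring.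
move=> hz; rewrite mulrDl; apply: LatD; first exact: LatZ.
by rewrite -mulrA; apply: LatZ; apply: hev.
Qed.

Lemma solve (a' b' a b k d : int) z : k * d = 12 ->
  a' * a - b' * b = d -> a' * b + b' * a + c * b' * b = 0 ->
  Lat v (e * v) ((a%:~R + b%:~R * e) * z) ->
  exists m n : int, z = ipt (k * (a' * m - b' * n)) (k * (a' * n + b' * m + c * b' * n)).
Proof.
move=> hkd h1 h2 [m [n hmn]]; exists m, n; apply: ipt_inj.
have h12 : (12%:R : C) = k%:~R * (a'%:~R * a%:~R - b'%:~R * b%:~R) by rewrite -!intrM -intrB h1 -intrM hkd.
have h0 : (a'%:~R * b%:~R + b'%:~R * a%:~R + c%:~R * b'%:~R * b%:~R : C) = 0
  by rewrite -!intrM -!intrD h2.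
have -> : 12%:R * z = k%:~R * ((a'%:~R + b'%:~R * e) * ((a%:~R + b%:~R * e) * z))
         - k%:~R * (a'%:~R * b%:~R + b'%:~R * a%:~R + c%:~R * b'%:~R * b%:~R) * e * z.
  rewrite h12; ring: he.
rewrite hmn h0 !(intrD, intrB, intrM); ring: he.
Qed.

Lemma one_minus (a b : int) : 1 - (a%:~R + b%:~R * e) = (1 - a)%:~R + (- b)%:~R * e.
Proof. by rewrite intrB intrN mulr1z; ring. Qed.

End EL.

Section EL2.
Local Open Scope complex_scope.
Variable R : realType.
Local Notation C := (R[i]).
Lemma ab_eq1 (e : C) (c a b : int) : e ^+ 2 = c%:~R * e - 1 -> (-1 <= c <= 1)%R ->
  a%:~R + b%:~R * e = 1 -> a = 1 /\ b = 0.
Proof.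
move=> he hc h.
have hb := @basis_ev R e 1 c he hc (oner_neq0 _).
have := @basis_uniq R 1 (e * 1) (a%:~R) (b%:~R) 1 0 hb.
rewrite !mulr1 -!CintR rmorph1 rmorph0 mul0r addr0 => /(_ h) [h1 h2].
split; apply: (@intr_inj R); by rewrite ?h1 ?h2.
Qed.
End EL2.

Section C3.
Local Open Scope complex_scope.
Variable R : realType.
Local Notation C := (R[i]).

Ltac simpz := rewrite ?intrN ?mulr1z ?mulr0z ?mul0r ?addr0 ?mul1r ?add0r ?mulN1r.

Lemma count3 (w1 w2 : C) G (e v : C) :
  e ^+ 2 = - e - 1 -> v != 0 -> (forall z, Lat w1 w2 z -> Lat v (e * v) z) ->
  is_aut_subgroup w1 w2 G ->
  (forall e' b, G (e', b) <-> (exists j : nat, e' = e ^+ j) /\ Lat v (e * v) b) ->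
  num_branch_points w1 w2 G 2.
Proof.
move=> he0 v0 hL hG hGE.
have he : e ^+ 2 = (-1)%:~R * e - 1 by simpz.
have hc : (-1 <= (-1 : int) <= 1)%R by [].
have e3 : e ^+ 3 = 1 by ring: he0.
have IN := ipt_in he hc v0.
have MUL := ipt_mul v he.
have SUB := ipt_subE e v.
have [_ _ hIm] := eps_coords hc he.
have Ech : forall e', (exists j : nat, e' = e ^+ j) <->
    exists a b : int, e' = a%:~R + b%:~R * e /\ (a, b) \in [:: (1, 0); (0, 1); (-1, -1)].
  move=> e'; split.
    move=> [j ->]; rewrite -(expr_mod j e3).
    have : (j %% 3 < 3)%N by rewrite ltn_mod.
    case: (j %% 3)%N => [|[|[|//]]] _.
    - by exists 1, 0; split => //; simpz; rewrite expr0.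
    - by exists 0, 1; split => //; simpz; rewrite expr1.
    - by exists (-1), (-1); split => //; simpz; rewrite he0; ring.
  move=> [a [b [-> hab]]]; move: hab; rewrite !inE => /or3P [] /eqP [-> ->].
  - by exists 0%N; simpz; rewrite expr0.
  - by exists 1%N; simpz; rewrite expr1.
  - by exists 2%N; simpz; rewrite he0; ring.
have ne1 : e != 1 by apply: contra hIm => /eqP ->.
pose p := fun i : 'I_2 => nth 0 [:: ipt e v (-4) 4; ipt e v 4 (-4)] i.
apply: (GC (E := fun e' => exists j : nat, e' = e ^+ j) (p := p) hG hGE hL).
- by move=> x y; apply: LatB.
- move=> [[|[|//]] Hi]; rewrite /p /=; split.
  + by move/IN; lia.
  + exists e; split => //; first by exists 1%N; rewrite expr1.
    have -> : 1 - e = 1%:~R + (-1)%:~R * e by simpz.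
    by rewrite MUL; apply/IN; lia.
  + by move/IN; lia.
  + exists e; split => //; first by exists 1%N; rewrite expr1.
    have -> : 1 - e = 1%:~R + (-1)%:~R * e by simpz.
    by rewrite MUL; apply/IN; lia.
- move=> z nMz [e' [/Ech [a [b [-> hab]]] n1 hMe]].
  rewrite one_minus in hMe.
  move: hab; rewrite !inE => /or3P [] /eqP [ha hb]; subst a b.
  + by move: n1; simpz; rewrite eqxx.
  + have [m [n hz]] := solve he (a' := 2) (b' := 1) (a := 1 - 0) (b := - 1) (k := 4) (d := 3) erefl erefl erefl hMe.
    rewrite hz in nMz *; move/IN: nMz => nMz.
    have : ((12 %| 4 * (2 * m - 1 * n) + 4) && (12 %| 4 * (2 * n + 1 * m + -1 * 1 * n) - 4)
         || (12 %| 4 * (2 * m - 1 * n) - 4) && (12 %| 4 * (2 * n + 1 * m + -1 * 1 * n) + 4))%Z by lia.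
    case/orP => /andP [h1 h2].
    * exists ord0, 1; split; first by exists 0%N; rewrite expr0.
      by rewrite /p /= (mul1r (ipt e v _ _)) SUB; apply/IN; split; lia.
    * exists (@Ordinal 2 1 isT), 1; split; first by exists 0%N; rewrite expr0.
      by rewrite /p /= (mul1r (ipt e v _ _)) SUB; apply/IN; split; lia.
  + have [m [n hz]] := solve he (a' := 1) (b' := -1) (a := 1 - -1) (b := - -1) (k := 4) (d := 3) erefl erefl erefl hMe.
    rewrite hz in nMz *; move/IN: nMz => nMz.
    have : ((12 %| 4 * (1 * m - -1 * n) + 4) && (12 %| 4 * (1 * n + -1 * m + -1 * -1 * n) - 4)
         || (12 %| 4 * (1 * m - -1 * n) - 4) && (12 %| 4 * (1 * n + -1 * m + -1 * -1 * n) + 4))%Z by lia.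
    case/orP => /andP [h1 h2].
    * exists ord0, 1; split; first by exists 0%N; rewrite expr0.
      by rewrite /p /= (mul1r (ipt e v _ _)) SUB; apply/IN; split; lia.
    * exists (@Ordinal 2 1 isT), 1; split; first by exists 0%N; rewrite expr0.
      by rewrite /p /= (mul1r (ipt e v _ _)) SUB; apply/IN; split; lia.
- move=> i j e' /Ech [a [b [-> hab]]] hM.
  move: hab; rewrite !inE => /or3P [] /eqP [ha hb]; subst a b;
  move: i j hM => [[|[|//]] Hi] [[|[|//]] Hj]; rewrite /p /= MUL SUB => /IN hM;
  try (by apply: val_inj); exfalso; lia.
Qed.
End C3.

Section C46.
Local Open Scope complex_scope.
Variable R : realType.
Local Notation C := (R[i]).

Ltac simpz := rewrite ?intrN ?mulr1z ?mulr0z ?mul0r ?addr0 ?mul1r ?add0r ?mulN1r.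

Lemma count4 (w1 w2 : C) G (e v : C) :
  e ^+ 2 = - 1 -> v != 0 -> (forall z, Lat w1 w2 z -> Lat v (e * v) z) ->
  is_aut_subgroup w1 w2 G ->
  (forall e' b, G (e', b) <-> (exists j : nat, e' = e ^+ j) /\ Lat v (e * v) b) ->
  num_branch_points w1 w2 G 2.
Proof.
move=> he0 v0 hL hG hGE.
have he : e ^+ 2 = (0 : int)%:~R * e - 1 by simpz.
have hc : (-1 <= (0 : int) <= 1)%R by [].
have e4 : e ^+ 4 = 1 by ring: he0.
have IN := ipt_in he hc v0.
have MUL := ipt_mul v he.
have SUB := ipt_subE e v.
have Ech : forall e', (exists j : nat, e' = e ^+ j) <->
    exists a b : int, e' = a%:~R + b%:~R * e /\
      (a, b) \in [:: (1, 0); (0, 1); (-1, 0); (0, -1)].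
  move=> e'; split.
    move=> [j ->]; rewrite -(expr_mod j e4).
    have : (j %% 4 < 4)%N by rewrite ltn_mod.
    case: (j %% 4)%N => [|[|[|[|//]]]] _.
    - by exists 1, 0; split => //; simpz; rewrite expr0.
    - by exists 0, 1; split => //; simpz; rewrite expr1.
    - by exists (-1), 0; split => //; simpz; rewrite he0.
    - by exists 0, (-1); split => //; simpz; ring: he0.
  move=> [a [b [-> hab]]]; move: hab; rewrite !inE => /or4P [] /eqP [-> ->].
  - by exists 0%N; simpz; rewrite expr0.
  - by exists 1%N; simpz; rewrite expr1.
  - by exists 2%N; simpz; rewrite he0.
  - by exists 3%N; simpz; ring: he0.
have N1 := ab_eq1 he hc.
pose p := fun i : 'I_2 => nth 0 [:: ipt e v 6 0; ipt e v 6 6] i.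
apply: (GC (E := fun e' => exists j : nat, e' = e ^+ j) (p := p) hG hGE hL).
- by move=> x y; apply: LatB.
- move=> [[|[|//]] Hi]; rewrite /p /=; split.
  + by move/IN; lia.
  + exists ((-1)%:~R + 0%:~R * e); split.
    * by apply/Ech; exists (-1), 0.
    * by apply/eqP => /N1 [].
    * by rewrite one_minus MUL; apply/IN; lia.
  + by move/IN; lia.
  + exists (0%:~R + 1%:~R * e); split.
    * by apply/Ech; exists 0, 1.
    * by apply/eqP => /N1 [].
    * by rewrite one_minus MUL; apply/IN; lia.
- move=> z nMz [e' [/Ech [a [b [-> hab]]] n1 hMe]].
  rewrite one_minus in hMe.
  move: hab; rewrite !inE => /or4P [] /eqP [ha hb]; subst a b.
  + by move: n1; simpz; rewrite eqxx.
  + have [m [n hz]] := solve he (a' := 1) (b' := 1) (a := 1 - 0) (b := - 1) (k := 6) (d := 2) erefl erefl erefl hMe.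
    rewrite hz in nMz *; move/IN: nMz => nMz.
    exists (@Ordinal 2 1 isT), (1%:~R + 0%:~R * e); split; first by apply/Ech; exists 1, 0.
    by rewrite /p /= MUL SUB; apply/IN; split; lia.
  + have [m [n hz]] := solve he (a' := 1) (b' := 0) (a := 1 - -1) (b := - 0) (k := 6) (d := 2) erefl erefl erefl hMe.
    rewrite hz in nMz *; move/IN: nMz => nMz.
    have : [|| (12 %| 6 * (1 * m - 0 * n) - 6) && (12 %| 6 * (1 * n + 0 * m + 0 * 0 * n)),
               (12 %| 6 * (1 * m - 0 * n)) && (12 %| 6 * (1 * n + 0 * m + 0 * 0 * n) - 6) |
               (12 %| 6 * (1 * m - 0 * n) - 6) && (12 %| 6 * (1 * n + 0 * m + 0 * 0 * n) - 6)]%Z by lia.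
    case/or3P => /andP [h1 h2].
    * exists ord0, (1%:~R + 0%:~R * e); split; first by apply/Ech; exists 1, 0.
      by rewrite /p /= MUL SUB; apply/IN; split; lia.
    * exists ord0, (0%:~R + 1%:~R * e); split; first by apply/Ech; exists 0, 1.
      by rewrite /p /= MUL SUB; apply/IN; split; lia.
    * exists (@Ordinal 2 1 isT), (1%:~R + 0%:~R * e); split; first by apply/Ech; exists 1, 0.
      by rewrite /p /= MUL SUB; apply/IN; split; lia.
  + have [m [n hz]] := solve he (a' := 1) (b' := -1) (a := 1 - 0) (b := - -1) (k := 6) (d := 2) erefl erefl erefl hMe.
    rewrite hz in nMz *; move/IN: nMz => nMz.
    exists (@Ordinal 2 1 isT), (1%:~R + 0%:~R * e); split; first by apply/Ech; exists 1, 0.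
    by rewrite /p /= MUL SUB; apply/IN; split; lia.
- move=> i j e' /Ech [a [b [-> hab]]] hM.
  move: hab; rewrite !inE => /or4P [] /eqP [ha hb]; subst a b;
  move: i j hM => [[|[|//]] Hi] [[|[|//]] Hj]; rewrite /p /= MUL SUB => /IN hM;
  try (by apply: val_inj); exfalso; lia.
Qed.

Lemma count6 (w1 w2 : C) G (e v : C) :
  e ^+ 2 = e - 1 -> v != 0 -> (forall z, Lat w1 w2 z -> Lat v (e * v) z) ->
  is_aut_subgroup w1 w2 G ->
  (forall e' b, G (e', b) <-> (exists j : nat, e' = e ^+ j) /\ Lat v (e * v) b) ->
  num_branch_points w1 w2 G 2.
Proof.
move=> he0 v0 hL hG hGE.
have he : e ^+ 2 = (1 : int)%:~R * e - 1 by simpz.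
have hc : (-1 <= (1 : int) <= 1)%R by [].
have e6 : e ^+ 6 = 1 by ring: he0.
have IN := ipt_in he hc v0.
have MUL := ipt_mul v he.
have SUB := ipt_subE e v.
have Ech : forall e', (exists j : nat, e' = e ^+ j) <->
    exists a b : int, e' = a%:~R + b%:~R * e /\
      (a, b) \in [:: (1, 0); (0, 1); (-1, 1); (-1, 0); (0, -1); (1, -1)].
  move=> e'; split.
    move=> [j ->]; rewrite -(expr_mod j e6).
    have : (j %% 6 < 6)%N by rewrite ltn_mod.
    case: (j %% 6)%N => [|[|[|[|[|[|//]]]]]] _.
    - by exists 1, 0; split => //; simpz; rewrite expr0.
    - by exists 0, 1; split => //; simpz; rewrite expr1.
    - by exists (-1), 1; split => //; simpz; rewrite he0; ring.
    - by exists (-1), 0; split => //; simpz; ring: he0.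
    - by exists 0, (-1); split => //; simpz; ring: he0.
    - by exists 1, (-1); split => //; simpz; ring: he0.
  move=> [a [b [-> hab]]]; move: hab; rewrite !inE => /orP [/eqP [-> ->]|].
    by exists 0%N; simpz; rewrite expr0.
  move=> /orP [/eqP [-> ->]|]; first by exists 1%N; simpz; rewrite expr1.
  move=> /orP [/eqP [-> ->]|]; first by exists 2%N; simpz; rewrite he0; ring.
  move=> /orP [/eqP [-> ->]|]; first by exists 3%N; simpz; ring: he0.
  move=> /orP [/eqP [-> ->]|]; first by exists 4%N; simpz; ring: he0.
  move=> /eqP [-> ->]; by exists 5%N; simpz; ring: he0.
have N1 := ab_eq1 he hc.
pose p := fun i : 'I_2 => nth 0 [:: ipt e v 4 4; ipt e v 6 0] i.
apply: (GC (E := fun e' => exists j : nat, e' = e ^+ j) (p := p) hG hGE hL).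
- by move=> x y; apply: LatB.
- move=> [[|[|//]] Hi]; rewrite /p /=; split.
  + by move/IN; lia.
  + exists ((-1)%:~R + 1%:~R * e); split.
    * by apply/Ech; exists (-1), 1.
    * by apply/eqP => /N1 [].
    * by rewrite one_minus MUL; apply/IN; lia.
  + by move/IN; lia.
  + exists ((-1)%:~R + 0%:~R * e); split.
    * by apply/Ech; exists (-1), 0.
    * by apply/eqP => /N1 [].
    * by rewrite one_minus MUL; apply/IN; lia.
- move=> z nMz [e' [/Ech [a [b [-> hab]]] n1 hMe]].
  rewrite one_minus in hMe.
  move: hab; rewrite !inE => /orP [/eqP [ha hb]|].
    by subst a b; move: n1; simpz; rewrite eqxx.
  move=> /orP [/eqP [ha hb]|].
    subst a b.
    have [m [n hz]] := solve he (a' := 0) (b' := 1) (a := 1 - 0) (b := - 1) (k := 12) (d := 1) erefl erefl erefl hMe.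
    by exfalso; apply: nMz; rewrite hz; apply/IN; split; lia.
  move=> /orP [/eqP [ha hb]|].
    subst a b.
    have [m [n hz]] := solve he (a' := 1) (b' := 1) (a := 1 - -1) (b := - 1) (k := 4) (d := 3) erefl erefl erefl hMe.
    rewrite hz in nMz *; move/IN: nMz => nMz.
    have : ((12 %| 4 * (1 * m - 1 * n) - 4) && (12 %| 4 * (1 * n + 1 * m + 1 * 1 * n) - 4)
         || (12 %| 4 * (1 * m - 1 * n) + 4) && (12 %| 4 * (1 * n + 1 * m + 1 * 1 * n) + 4))%Z by lia.
    case/orP => /andP [h1 h2].
    * exists ord0, (1%:~R + 0%:~R * e); split; first by apply/Ech; exists 1, 0.
      by rewrite /p /= MUL SUB; apply/IN; split; lia.
    * exists ord0, ((-1)%:~R + 0%:~R * e); split; first by apply/Ech; exists (-1), 0.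
      by rewrite /p /= MUL SUB; apply/IN; split; lia.
  move=> /orP [/eqP [ha hb]|].
    subst a b.
    have [m [n hz]] := solve he (a' := 1) (b' := 0) (a := 1 - -1) (b := - 0) (k := 6) (d := 2) erefl erefl erefl hMe.
    rewrite hz in nMz *; move/IN: nMz => nMz.
    have : [|| (12 %| 6 * (1 * m - 0 * n) - 6) && (12 %| 6 * (1 * n + 0 * m + 1 * 0 * n)),
               (12 %| 6 * (1 * m - 0 * n)) && (12 %| 6 * (1 * n + 0 * m + 1 * 0 * n) - 6) |
               (12 %| 6 * (1 * m - 0 * n) - 6) && (12 %| 6 * (1 * n + 0 * m + 1 * 0 * n) - 6)]%Z by lia.
    case/or3P => /andP [h1 h2].
    * exists (@Ordinal 2 1 isT), (1%:~R + 0%:~R * e); split; first by apply/Ech; exists 1, 0.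
      by rewrite /p /= MUL SUB; apply/IN; split; lia.
    * exists (@Ordinal 2 1 isT), (0%:~R + 1%:~R * e); split; first by apply/Ech; exists 0, 1.
      by rewrite /p /= MUL SUB; apply/IN; split; lia.
    * exists (@Ordinal 2 1 isT), ((-1)%:~R + 1%:~R * e); split; first by apply/Ech; exists (-1), 1.
      by rewrite /p /= MUL SUB; apply/IN; split; lia.
  move=> /orP [/eqP [ha hb]|].
    subst a b.
    have [m [n hz]] := solve he (a' := 2) (b' := -1) (a := 1 - 0) (b := - -1) (k := 4) (d := 3) erefl erefl erefl hMe.
    rewrite hz in nMz *; move/IN: nMz => nMz.
    have : ((12 %| 4 * (2 * m - -1 * n) - 4) && (12 %| 4 * (2 * n + -1 * m + 1 * -1 * n) - 4)
         || (12 %| 4 * (2 * m - -1 * n) + 4) && (12 %| 4 * (2 * n + -1 * m + 1 * -1 * n) + 4))%Z by lia.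
    case/orP => /andP [h1 h2].
    * exists ord0, (1%:~R + 0%:~R * e); split; first by apply/Ech; exists 1, 0.
      by rewrite /p /= MUL SUB; apply/IN; split; lia.
    * exists ord0, ((-1)%:~R + 0%:~R * e); split; first by apply/Ech; exists (-1), 0.
      by rewrite /p /= MUL SUB; apply/IN; split; lia.
  move=> /eqP [ha hb]; subst a b.
  have [m [n hz]] := solve he (a' := 1) (b' := -1) (a := 1 - 1) (b := - -1) (k := 12) (d := 1) erefl erefl erefl hMe.
  by exfalso; apply: nMz; rewrite hz; apply/IN; split; lia.
- move=> i j e' /Ech [a [b [-> hab]]] hM.
  move: hab; rewrite !inE => /orP [/eqP [ha hb]|/orP [/eqP [ha hb]|/orP [/eqP [ha hb]|/orP [/eqP [ha hb]|/orP [/eqP [ha hb]|/eqP [ha hb]]]]]]; subst a b;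
  move: i j hM => [[|[|//]] Hi] [[|[|//]] Hj]; rewrite /p /= MUL SUB => /IN hM;
  try (by apply: val_inj); exfalso; lia.
Qed.
End C46.

Section CN.
Local Open Scope complex_scope.
Variable R : realType.
Local Notation C := (R[i]).

Lemma lptM (u1 u2 : C) D (k x y : int) :
  k%:~R * lpt u1 u2 D x y = lpt u1 u2 D (k * x) (k * y).
Proof. by rewrite /lpt !intrM; ring. Qed.

Lemma lptN (u1 u2 : C) D (x y : int) :
  - lpt u1 u2 D x y = lpt u1 u2 D (- x) (- y).
Proof. by rewrite /lpt !intrN; ring. Qed.

Lemma countN (w1 w2 : C) G (u1 u2 : C) :
  is_lattice_basis u1 u2 -> (forall z, Lat w1 w2 z -> Lat u1 u2 z) ->
  is_aut_subgroup w1 w2 G ->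
  (forall e' b, G (e', b) <-> (exists j : nat, e' = (-1) ^+ j) /\ Lat u1 u2 b) ->
  num_branch_points w1 w2 G 3.
Proof.
move=> hb hL hG hGE.
have IN := fun x y => lpt_in x y hb (isT : (0 < 2)%N).
have SUB := lpt_sub u1 u2 2.
have MUL := lptM u1 u2 2.
have m1 : (-1 : C) = (-1 : int)%:~R by rewrite intrN mulr1z.
have p1 : (1 : C) = (1 : int)%:~R by rewrite mulr1z.
have n1 : (-1 : C) != 1.
  by rewrite -subr_eq0 -opprD oppr_eq0 -[1 + 1]/(2%:R) pnatr_eq0.
have Ech : forall e', (exists j : nat, e' = (-1) ^+ j) <-> e' = 1 \/ e' = -1.
  move=> e'; split.
    by move=> [j ->]; rewrite -signr_odd; case: (odd j); [right; rewrite expr1|left; rewrite expr0].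
  by case=> ->; [exists 0%N; rewrite expr0|exists 1%N; rewrite expr1].
pose p := fun i : 'I_3 => nth 0 [:: lpt u1 u2 2 1 0; lpt u1 u2 2 0 1; lpt u1 u2 2 1 1] i.
apply: (GC (E := fun e' => exists j : nat, e' = (-1) ^+ j) (p := p) hG hGE hL).
- by move=> x y; apply: LatB.
- move=> [[|[|[|//]]] Hi]; rewrite /p /=; (split; [by move/IN; lia|]);
  exists (-1); (split; [by apply/Ech; right| by []|]);
  rewrite opprK -[1 + 1]/(2%:R) -[2%:R]/((2 : int)%:~R) MUL; apply/IN; lia.
- move=> z nMz [e' [/Ech [->|->] ne1 hMe]]; first by rewrite eqxx in ne1.
  move: hMe; rewrite opprK => -[m [n hmn]].
  have hz : z = lpt u1 u2 2 m n.
    have h2 : (2%:R : C) != 0 by rewrite pnatr_eq0.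
    apply: (mulfI h2); rewrite -[1 + 1]/(2%:R) in hmn; by rewrite hmn /lpt; field.
  rewrite hz in nMz *; move/IN: nMz => nMz.
  have : [|| (2 %| m - 1) && (2 %| n), (2 %| m) && (2 %| n - 1) |
             (2 %| m - 1) && (2 %| n - 1)]%Z by lia.
  case/or3P => /andP [h1 h2].
  + exists ord0, 1; split; first by apply/Ech; left.
    by rewrite /p /= (mul1r (lpt _ _ _ _ _)) SUB; apply/IN; split; lia.
  + exists (@Ordinal 3 1 isT), 1; split; first by apply/Ech; left.
    by rewrite /p /= (mul1r (lpt _ _ _ _ _)) SUB; apply/IN; split; lia.
  + exists (@Ordinal 3 2 isT), 1; split; first by apply/Ech; left.
    by rewrite /p /= (mul1r (lpt _ _ _ _ _)) SUB; apply/IN; split; lia.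
- move=> i j e' /Ech [->|->] hM;
  move: i j hM => [[|[|[|//]]] Hi] [[|[|[|//]]] Hj]; rewrite /p /= ?(mul1r (lpt _ _ _ _ _)) ?m1 ?MUL SUB => /IN hM;
  try (by apply: val_inj); exfalso; lia.
Qed.
End CN.

Section PN.
Local Open Scope complex_scope.
Variable R : realType.
Local Notation C := (R[i]).

Lemma basisN (w1 w2 k : C) (N : nat) :
  is_lattice_basis w1 w2 -> (0 < N)%N -> Lat w1 w2 (N%:R * k) ->
  (forall j : nat, (0 < j)%N -> (j < N)%N -> ~ Lat w1 w2 (j%:R * k)) ->
  exists u1 u2 : C, [/\ is_lattice_basis u1 u2, (forall z, Lat w1 w2 z -> Lat u1 u2 z), Lat u1 u2 k &
     exists a1 b1 c1 a2 b2 c2 : int, u1 = a1%:~R * k + b1%:~R * w1 + c1%:~R * w2 /\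
                                 u2 = a2%:~R * k + b2%:~R * w1 + c2%:~R * w2].
Proof.
move=> hb N0 [a [b hk]] hmin.
pose d : nat := gcdn `|b|%N N.
have d0 : (0 < d)%N.
  have : gcdz b N != 0.
    rewrite gcdz_eq0 negb_and; apply/orP; right.
    by rewrite eqz_nat -lt0n.
  by rewrite lt0n -eqz_nat.
have [s [t hst]] := Bezoutz b N.
have dE : gcdz b N = d%:Z by [].
have /dvdzP [b' hb'] := dvdz_gcdl b N.
have /dvdzP [e hN] := dvdz_gcdr b N.
rewrite dE in hb' hN hst.
have g1 : gcdz a d = 1.
  pose g : nat := gcdn `|a|%N d.
  have gE : gcdz a d = g%:Z by [].
  rewrite gE; apply/eqP; rewrite eqz_nat; apply: contraT => gn1.
  have g0 : (0 < g)%N.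
    have : gcdz a d != 0.
      rewrite gcdz_eq0 negb_and; apply/orP; right.
      by rewrite eqz_nat -lt0n.
    by rewrite lt0n -eqz_nat.
  have g2 : (2 <= g)%N by lia.
  have /dvdzP [a1 ha1] := dvdz_gcdl a d.
  have /dvdzP [h hd] := dvdz_gcdr a d.
  rewrite gE in ha1 hd.
  have gN : (g %| N)%N.
    have : (g%:Z %| N%:Z)%Z by apply/dvdzP; exists (e * h); rewrite hN hd; ring.
    by [].
  pose j := (N %/ g)%N.
  have hj : N = (j * g)%N by rewrite /j divnK.
  have [j0 jN] : (0 < j)%N /\ (j < N)%N by nia.
  exfalso; apply: (hmin j j0 jN); exists a1, (b' * h).
  have gC : (g%:R : C) != 0 by rewrite pnatr_eq0 -lt0n.
  apply: (mulfI gC).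
  have -> : (g%:R : C) * (j%:R * k) = N%:R * k by rewrite mulrA -natrM mulnC -hj.
  rewrite hk hb' ha1.
  have hd' : ((d%:Z)%:~R : C) = h%:~R * g%:R by rewrite hd intrM.
  rewrite !intrM hd'; ring.
have [x [y hxy]] := Bezoutz a d.
rewrite g1 in hxy.
pose u1 := (x * e)%:~R * k + y%:~R * w1 + (- (x * b'))%:~R * w2.
pose u2 := s%:~R * k + 0%:~R * w1 + t%:~R * w2.
have dC : ((d%:Z)%:~R : C) != 0 by rewrite intr_eq0 -lt0n.
have NC : ((N%:Z)%:~R : C) != 0 by rewrite intr_eq0 -lt0n.
have HK : ((N%:Z)%:~R : C) * k = a%:~R * w1 + b%:~R * w2 by [].
have HB : (b%:~R : C) = b'%:~R * (d%:Z)%:~R by rewrite hb' intrM.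
have HN : ((N%:Z)%:~R : C) = e%:~R * (d%:Z)%:~R by rewrite hN intrM.
have HST : (s%:~R * b%:~R + t%:~R * (N%:Z)%:~R : C) = (d%:Z)%:~R by rewrite -!intrM -intrD hst.
have HXY : (x%:~R * a%:~R + y%:~R * (d%:Z)%:~R : C) = 1 by rewrite -!intrM -intrD hxy.
have ST1 : s * b' + t * e = 1.
  apply: (@mulIf _ d%:Z); first by rewrite eqz_nat -lt0n.
  by rewrite mul1r mulrDl -!mulrA -hb' -hN.
have ST1C : (s%:~R * b'%:~R + t%:~R * e%:~R : C) = 1 by rewrite -!intrM -intrD ST1.
have Hu1 : (d%:Z)%:~R * u1 = w1.
  rewrite /u1 intrN !intrM.
  have -> : (d%:Z)%:~R * ((x%:~R * e%:~R) * k + y%:~R * w1 + - (x%:~R * b'%:~R) * w2)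
      = x%:~R * (e%:~R * (d%:Z)%:~R * k) + y%:~R * (d%:Z)%:~R * w1 - x%:~R * (b'%:~R * (d%:Z)%:~R) * w2 by ring.
  rewrite -HN -HB HK.
  have -> : x%:~R * (a%:~R * w1 + b%:~R * w2) + y%:~R * (d%:Z)%:~R * w1 - x%:~R * b%:~R * w2
      = (x%:~R * a%:~R + y%:~R * (d%:Z)%:~R) * w1 :> C by ring.
  by rewrite HXY mul1r.
have Hu2 : (N%:Z)%:~R * u2 = (s * a)%:~R * w1 + (d%:Z)%:~R * w2.
  rewrite /u2 intrM.
  have -> : (N%:Z)%:~R * (s%:~R * k + 0%:~R * w1 + t%:~R * w2)
      = s%:~R * ((N%:Z)%:~R * k) + t%:~R * (N%:Z)%:~R * w2 :> C by rewrite mulr0z; ring.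
  rewrite HK -HST; ring.
exists u1, u2; split.
- move=> al be h.
  have h2 : (al * (N%:Z)%:~R + be * (d%:Z)%:~R * (s * a)%:~R)%:C * w1 + (be * (d%:Z)%:~R * (d%:Z)%:~R)%:C * w2 = 0.
    transitivity ((d%:Z)%:~R * (N%:Z)%:~R * (al%:C * u1 + be%:C * u2)); last by rewrite h mulr0.
    rewrite !rmorphD !rmorphM /= -!CintR.
    have -> : (d%:Z)%:~R * (N%:Z)%:~R * (al%:C * u1 + be%:C * u2)
        = (N%:Z)%:~R * al%:C * ((d%:Z)%:~R * u1) + (d%:Z)%:~R * be%:C * ((N%:Z)%:~R * u2) :> C by ring.
    rewrite Hu1 Hu2; ring.
  have [h3 h4] := hb _ _ h2.
  have dR : ((d%:Z)%:~R : R) != 0 by rewrite intr_eq0 -lt0n.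
  have NR : ((N%:Z)%:~R : R) != 0 by rewrite intr_eq0 -lt0n.
  have be0 : be = 0.
    by move/eqP: h4; rewrite !mulf_eq0 (negbTE dR) !orbF => /eqP.
  split => //; move: h3; rewrite be0 !mul0r addr0 => /eqP; rewrite mulf_eq0 (negbTE NR) orbF.
  by move/eqP.
- apply: Lat_sub.
    by exists d%:Z, 0; rewrite Hu1 mul0r addr0.
  exists (- (s * a)), e; apply: (mulfI dC).
  have -> : (d%:Z)%:~R * ((- (s * a))%:~R * u1 + e%:~R * u2)
      = (- (s * a))%:~R * ((d%:Z)%:~R * u1) + (e%:~R * (d%:Z)%:~R) * u2 :> C by ring.
  rewrite Hu1 -HN Hu2 intrN; ring.
- exists (a * t), b'; apply: (mulfI NC).
  have -> : (N%:Z)%:~R * ((a * t)%:~R * u1 + b'%:~R * u2)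
      = (a * t)%:~R * e%:~R * ((d%:Z)%:~R * u1) + b'%:~R * ((N%:Z)%:~R * u2) :> C by rewrite HN; ring.
  rewrite HK Hu2 Hu1 HB !intrM.
  have -> : (a%:~R : C) * w1 = a%:~R * (s%:~R * b'%:~R + t%:~R * e%:~R) * w1 by rewrite ST1C mulr1.
  ring.
- exists (x * e), y, (- (x * b')), s, 0, t; split; by [].
Qed.
End PN.

Section Main.
Local Open Scope complex_scope.
Variable R : realType.
Local Notation C := (R[i]).

Ltac simpz := rewrite ?intrN ?mulr1z ?mulr0z ?mul0r ?addr0 ?mul1r ?add0r ?mulN1r.

Lemma eps_lat (w1 w2 e : C) : in_Aut0 w1 w2 e -> forall z, Lat w1 w2 z -> Lat w1 w2 (e * z).
Proof. by move=> [_ him] z hz; rewrite -him; exists z. Qed.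

Lemma tr_comb (w1 w2 : C) G (x1 x2 x3 x4 : C) (a1 a2 a3 a4 : int) :
  is_aut_subgroup w1 w2 G -> G (1, x1) -> G (1, x2) -> G (1, x3) -> G (1, x4) ->
  G (1, a1%:~R * x1 + a2%:~R * x2 + a3%:~R * x3 + a4%:~R * x4).
Proof.
move=> hG h1 h2 h3 h4.
apply: (tr_add hG); last exact: (tr_int hG).
apply: (tr_add hG); last exact: (tr_int hG).
by apply: (tr_add hG); exact: (tr_int hG).
Qed.

Lemma tr_Lat (w1 w2 : C) G (u1 u2 : C) :
  is_aut_subgroup w1 w2 G -> G (1, u1) -> G (1, u2) -> forall z, Lat u1 u2 z -> G (1, z).
Proof.
by move=> hG h1 h2 z [m [n ->]]; apply: (tr_add hG); apply: (tr_int hG).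
Qed.

Lemma caseL (w1 w2 : C) Gam Gp (e : C) (c : int) :
  is_lattice_basis w1 w2 -> (-1 <= c <= 1)%R -> e ^+ 2 = c%:~R * e - 1 ->
  in_Aut0 w1 w2 e -> Gp = [set p | exists j : nat, p = (e ^+ j, 0)] ->
  semidirect_is w1 w2 Gam Gp [set (1, 0)] ->
  exists v, [/\ v != 0, (forall z, Lat w1 w2 z -> Lat v (e * v) z) &
     forall e' b, Gam (e', b) <-> (exists j : nat, e' = e ^+ j) /\ Lat v (e * v) b].
Proof.
move=> hb hc he hA hGp hsd.
have [v [v0 hL]] := zbasis hc he hb (eps_lat hA).
exists v; split => //; first by rewrite -hL.
rewrite -hL; apply: (Sg_eq hsd).
- move=> e' b [|]; last by move=> [-> ->]; split; [exists 0%N; rewrite expr0|apply: Lat0].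
  by rewrite hGp => -[j [-> ->]]; split; [exists j|apply: Lat0].
- apply: Sg_subgroup => //; first by move=> x y; apply: LatB.
  exact: eps_lat.
- have [hG [hAG _]] := hsd.
  apply: (Sg_in hG).
    by apply: hAG; left; rewrite hGp; exists 1%N; rewrite expr1.
  by move=> b hb'; apply: (tr_lat hG).
Qed.

Lemma caseK (w1 w2 : C) Gam Gp K (e : C) :
  is_lattice_basis w1 w2 -> e ^+ 2 = - e - 1 ->
  in_Aut0 w1 w2 e -> Gp = [set p | exists j : nat, p = (e ^+ j, 0)] ->
  klein_t w1 w2 K ->
  semidirect_is w1 w2 Gam Gp K ->
  num_branch_points w1 w2 Gam 2.
Proof.
move=> hb he0 hA hGp [k1 [k2 [h2k1 h2k2 [nk1 _ _] hK]]] hsd.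
have he : e ^+ 2 = (-1 : int)%:~R * e - 1 by simpz.
have hc : (-1 <= (-1 : int) <= 1)%R by [].
have [v [v0 hL]] := zbasis hc he hb (eps_lat hA).
have h2 : (2 : C) != 0 by rewrite pnatr_eq0.
have [v2 hv] : exists v2, v = 2 * v2 by exists (v / 2); rewrite mulrC divfK.
have hev : e * v = 2 * (e * v2) by rewrite hv mulrCA.
pose M := Lat v2 (e * v2).
have LM : forall z, Lat w1 w2 z -> M z.
  rewrite hL; apply: Lat_sub; [rewrite hv; apply: (@LatZ _ _ _ 2); apply: Lat_u1|rewrite hev; apply: (@LatZ _ _ _ 2); apply: Lat_u2].
have half : forall z, Lat w1 w2 (2%:R * z) -> M z.
  move=> z; rewrite hL => -[m [n hmn]]; exists m, n.
  apply: (mulfI h2); rewrite hmn hev hv; ring.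
have eM : forall z, M z -> M (e * z).
  apply: Lat_mul; first exact: Lat_u2.
  exists (-1), (-1); rewrite mulrA -expr2 he0; simpz; ring.
have hG : is_aut_subgroup w1 w2 Gam by case: hsd.
have [_ [hAG _]] := hsd.
have Ge : Gam (e, 0) by apply: hAG; left; rewrite hGp; exists 1%N; rewrite expr1.
have hGE : forall e' b, Gam (e', b) <-> (exists j : nat, e' = e ^+ j) /\ M b.
  apply: (Sg_eq hsd).
  - move=> e' b [|].
      by rewrite hGp => -[j [-> ->]]; split; [exists j|apply: Lat0].
    rewrite hK => -[a [b' [-> ->]]]; split; first by exists 0%N; rewrite expr0.
    by apply: LatD; [apply: (@LatZ _ _ _ (a%:Z)) | apply: (@LatZ _ _ _ (b'%:Z))]; apply: half.
  - apply: Sg_subgroup => //; by move=> x y; apply: LatB.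
  - apply: (Sg_in hG Ge).
    have Gk1 : Gam (1, k1).
      by apply: hAG; right; rewrite hK; exists 1%N, 0%N; rewrite mul1r mul0r addr0.
    have Gek1 : Gam (1, e * k1) by apply: (tr_rot hG).
    have Gv : Gam (1, v) by apply: (tr_lat hG); rewrite hL; apply: Lat_u1.
    have Gev : Gam (1, e * v) by apply: (tr_lat hG); rewrite hL; apply: Lat_u2.
    have [m [n hmn]] : Lat v (e * v) (2%:R * k1) by rewrite -hL.
    have nmn : ~~ ((2 %| m)%Z && (2 %| n)%Z).
      apply/negP => /andP [/dvdzP [m' hm] /dvdzP [n' hn]]; apply: nk1; rewrite hL.
      exists m', n'; apply: (mulfI h2); rewrite hmn hm hn !intrM; ring.
    have CB : forall a1 a2 a3 a4 : int, Gam (1, a1%:~R * k1 + a2%:~R * (e * k1) + a3%:~R * v + a4%:~R * (e * v)).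
      move=> a1 a2 a3 a4; apply: (tr_add hG); last exact: (tr_int hG).
      apply: (tr_add hG); last exact: (tr_int hG).
      by apply: (tr_add hG); exact: (tr_int hG).
    have [Gv2 Gev2] : Gam (1, v2) /\ Gam (1, e * v2).
      case hm: (2 %| m)%Z; case hn: (2 %| n)%Z; rewrite ?hm ?hn // in nmn.
      + have hm' : m = 2 * (m %/ 2)%Z by lia.
        have hn' : n = 2 * (n %/ 2)%Z + 1 by lia.
        rewrite hm' hn' in hmn.
        move: (m %/ 2)%Z (n %/ 2)%Z hmn => m' n' hmn.
        split.
          have -> : v2 = (-1)%:~R * k1 + (-1)%:~R * (e * k1) + (m' - n')%:~R * v + m'%:~R * (e * v).
            apply: (mulfI h2); rewrite [in RHS]mulrDr [in RHS]mulrDr [in RHS]mulrDr.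
            rewrite !mulrA ![2 * _%:~R]mulrC -!mulrA ![2 * (e * _)]mulrCA hmn.
            rewrite hv ?intrD ?intrM ?intrB ?intrN; simpz; ring: he0.
          exact: CB.
        have -> : e * v2 = 1%:~R * k1 + 0%:~R * (e * k1) + (- m')%:~R * v + (- n')%:~R * (e * v).
          apply: (mulfI h2); rewrite [in RHS]mulrDr [in RHS]mulrDr [in RHS]mulrDr.
          rewrite !mulrA ![2 * _%:~R]mulrC -!mulrA ![2 * (e * _)]mulrCA hmn.
          rewrite hv ?intrD ?intrM ?intrB ?intrN; simpz; ring: he0.
        exact: CB.
      + have hm' : m = 2 * (m %/ 2)%Z + 1 by lia.
        have hn' : n = 2 * (n %/ 2)%Z by lia.
        rewrite hm' hn' in hmn.
        move: (m %/ 2)%Z (n %/ 2)%Z hmn => m' n' hmn.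
        split.
          have -> : v2 = 1%:~R * k1 + 0%:~R * (e * k1) + (- m')%:~R * v + (- n')%:~R * (e * v).
            apply: (mulfI h2); rewrite [in RHS]mulrDr [in RHS]mulrDr [in RHS]mulrDr.
            rewrite !mulrA ![2 * _%:~R]mulrC -!mulrA ![2 * (e * _)]mulrCA hmn.
            rewrite hv ?intrD ?intrM ?intrB ?intrN; simpz; ring: he0.
          exact: CB.
        have -> : e * v2 = 0%:~R * k1 + 1%:~R * (e * k1) + n'%:~R * v + (n' - m')%:~R * (e * v).
          apply: (mulfI h2); rewrite [in RHS]mulrDr [in RHS]mulrDr [in RHS]mulrDr.
          rewrite !mulrA ![2 * _%:~R]mulrC -!mulrA ![2 * (e * _)]mulrCA hmn.
          rewrite hv ?intrD ?intrM ?intrB ?intrN; simpz; ring: he0.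
        exact: CB.
      + have hm' : m = 2 * (m %/ 2)%Z + 1 by lia.
        have hn' : n = 2 * (n %/ 2)%Z + 1 by lia.
        rewrite hm' hn' in hmn.
        move: (m %/ 2)%Z (n %/ 2)%Z hmn => m' n' hmn.
        split.
          have -> : v2 = 0%:~R * k1 + (-1)%:~R * (e * k1) + (- n')%:~R * v + (m' - n')%:~R * (e * v).
            apply: (mulfI h2); rewrite [in RHS]mulrDr [in RHS]mulrDr [in RHS]mulrDr.
            rewrite !mulrA ![2 * _%:~R]mulrC -!mulrA ![2 * (e * _)]mulrCA hmn.
            rewrite hv ?intrD ?intrM ?intrB ?intrN; simpz; ring: he0.
          exact: CB.
        have -> : e * v2 = 1%:~R * k1 + 1%:~R * (e * k1) + (n' - m')%:~R * v + (- m')%:~R * (e * v).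
          apply: (mulfI h2); rewrite [in RHS]mulrDr [in RHS]mulrDr [in RHS]mulrDr.
          rewrite !mulrA ![2 * _%:~R]mulrC -!mulrA ![2 * (e * _)]mulrCA hmn.
          rewrite hv ?intrD ?intrM ?intrB ?intrN; simpz; ring: he0.
        exact: CB.
    exact: (tr_Lat hG).
apply: (count3 he0 _ _ hG hGE).
  by apply/eqP => v20; move: v0; rewrite hv v20 mulr0 eqxx.
exact: LM.
Qed.
End Main.

Section Fin.
Local Open Scope complex_scope.
Variable R : realType.
Local Notation C := (R[i]).

Lemma caseN (w1 w2 : C) Gam Gp K (e : C) (N : nat) :
  is_lattice_basis w1 w2 -> (1 <= N)%N ->
  in_Aut0 w1 w2 e -> e ^+ 2 = 1 -> e != 1 -> Gp = [set p | exists j : nat, p = (e ^+ j, 0)] ->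
  cyclic_t_of_order w1 w2 N K -> semidirect_is w1 w2 Gam Gp K ->
  num_branch_points w1 w2 Gam 3.
Proof.
move=> hb N1 hA he2 ne1 hGp [k [hNk hjk hK]] hsd.
have em1 : e = -1.
  have h : (e - 1) * (e + 1) = 0 by ring: he2.
  move/eqP: h; rewrite mulf_eq0 subr_eq0 (negbTE ne1) /= addr_eq0 => /eqP //.
have [u1 [u2 [hbu hLu hku [a1 [b1 [c1 [a2 [b2 [c2 [hu1 hu2]]]]]]]]]] := basisN hb N1 hNk hjk.
have hG : is_aut_subgroup w1 w2 Gam by case: hsd.
have [_ [hAG _]] := hsd.
have Ge : Gam (e, 0) by apply: hAG; left; rewrite hGp; exists 1%N; rewrite expr1.
have Gk : Gam (1, k) by apply: hAG; right; rewrite hK; exists 1%N; rewrite mul1r.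
have Gw1 : Gam (1, w1) by apply: (tr_lat hG); apply: Lat_u1.
have Gw2 : Gam (1, w2) by apply: (tr_lat hG); apply: Lat_u2.
have C3 : forall x y z : int, Gam (1, x%:~R * k + y%:~R * w1 + z%:~R * w2).
  move=> x y z; apply: (tr_add hG); last exact: (tr_int hG).
  by apply: (tr_add hG); exact: (tr_int hG).
have hGE : forall e' b, Gam (e', b) <-> (exists j : nat, e' = e ^+ j) /\ Lat u1 u2 b.
  apply: (Sg_eq hsd).
  - move=> e' b [|].
      by rewrite hGp => -[j [-> ->]]; split; [exists j|apply: Lat0].
    rewrite hK => -[j [-> ->]]; split; first by exists 0%N; rewrite expr0.
    exact: (@LatZ _ _ _ (j%:Z)).
  - apply: Sg_subgroup => //; first by move=> x y; apply: LatB.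
    by move=> x hx; rewrite em1 mulN1r; apply: LatN.
  - apply: (Sg_in hG Ge); apply: (tr_Lat hG); [rewrite hu1|rewrite hu2]; exact: C3.
apply: (countN hbu hLu hG).
by rewrite -em1.
Qed.
End Fin.


Unset Implicit Arguments.

Theorem lemma4p6 (R : realType) (w1 w2 : R[i]) (Gam : set (R[i] * R[i])) :
  is_lattice_basis w1 w2 ->
  is_finite_aut_subgroup w1 w2 Gam ->
  [/\ (forall e b, Gam (e, b) -> e = 1) -> num_branch_points w1 w2 Gam 0,
      ((exists l Gp, [/\ l \in [:: 3; 4; 6]%N, cyclic_Aut0_of_order w1 w2 l Gp &
                        semidirect_is w1 w2 Gam Gp [set (1, 0)]]) \/
       (exists Gp K, [/\ cyclic_Aut0_of_order w1 w2 3 Gp, klein_t w1 w2 K &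
                        semidirect_is w1 w2 Gam Gp K])) ->
        num_branch_points w1 w2 Gam 2 &
      forall N : nat, (1 <= N)%N ->
        (exists Gp K, [/\ cyclic_Aut0_of_order w1 w2 2 Gp,
                          cyclic_t_of_order w1 w2 N K &
                          semidirect_is w1 w2 Gam Gp K]) ->
        num_branch_points w1 w2 Gam 3].
Proof.
move=> hb [hG hfin]; split.
- move=> h1; rewrite /num_branch_points.
  have -> : branch_points w1 w2 Gam = (fun i : 'I_0 => (set0 : set R[i])) @` setT.
    rewrite predeqE => O; split; last by move=> [[i hi]].
    move=> [z [_ [e' [b [Geb hn hl]]] _]]; exfalso; apply: hn.
    have e1 := h1 _ _ Geb; split => //; move: hl.
    by rewrite e1 mul1r addrC addKr.
  by apply: inj_card_eq; move=> [].
- case=> [[l [Gp [hl [e [hA hel hej hGp]] hsd]]]|[Gp [K [[e [hA he3 hej hGp]] hK hsd]]]].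
  + move: hl; rewrite !inE => /or3P [] /eqP hl; subst l;
    (have ne1 : e != 1 by have := hej 1%N isT isT; rewrite expr1).
    * have h : (e - 1) * (e ^+ 2 + e + 1) = 0.
        have -> : (e - 1) * (e ^+ 2 + e + 1) = e ^+ 3 - 1 by ring.
        by rewrite hel subrr.
      move/eqP: h; rewrite mulf_eq0 subr_eq0 (negbTE ne1) /= => /eqP h'.
      have he0 : e ^+ 2 = - e - 1 by apply/eqP; rewrite -subr_eq0; apply/eqP; rewrite -h'; ring.
      have he : e ^+ 2 = (-1 : int)%:~R * e - 1 by rewrite intrN mulr1z mulN1r.
      have [v [v0 hL hGE]] := caseL hb (isT : (-1 <= (-1 : int) <= 1)%R) he hA hGp hsd.
      exact: (count3 he0 v0 hL hG hGE).
    * have ne2 : e ^+ 2 != 1 by apply: hej.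
      have h : (e ^+ 2 - 1) * (e ^+ 2 + 1) = 0.
        have -> : (e ^+ 2 - 1) * (e ^+ 2 + 1) = e ^+ 4 - 1 by ring.
        by rewrite hel subrr.
      move/eqP: h; rewrite mulf_eq0 subr_eq0 (negbTE ne2) /= addr_eq0 => /eqP he0.
      have he : e ^+ 2 = (0 : int)%:~R * e - 1 by rewrite mulr0z mul0r add0r.
      have [v [v0 hL hGE]] := caseL hb (isT : (-1 <= (0 : int) <= 1)%R) he hA hGp hsd.
      exact: (count4 he0 v0 hL hG hGE).
    * have ne2 : e ^+ 2 != 1 by apply: hej.
      have ne3 : e ^+ 3 != 1 by apply: hej.
      have h : (e ^+ 3 - 1) * (e ^+ 3 + 1) = 0.
        have -> : (e ^+ 3 - 1) * (e ^+ 3 + 1) = e ^+ 6 - 1 by ring.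
        by rewrite hel subrr.
      move/eqP: h; rewrite mulf_eq0 subr_eq0 (negbTE ne3) /= => /eqP h3.
      have h : (e + 1) * (e ^+ 2 - e + 1) = 0.
        have -> : (e + 1) * (e ^+ 2 - e + 1) = e ^+ 3 + 1 by ring.
        exact: h3.
      have ne : e + 1 != 0.
        apply: contra ne2; rewrite addr_eq0 => /eqP ->; by rewrite sqrrN expr1n.
      move/eqP: h; rewrite mulf_eq0 (negbTE ne) /= => /eqP h'.
      have he0 : e ^+ 2 = e - 1 by apply/eqP; rewrite -subr_eq0; apply/eqP; rewrite -h'; ring.
      have he : e ^+ 2 = (1 : int)%:~R * e - 1 by rewrite mulr1z mul1r.
      have [v [v0 hL hGE]] := caseL hb (isT : (-1 <= (1 : int) <= 1)%R) he hA hGp hsd.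
      exact: (count6 he0 v0 hL hG hGE).
  + have ne1 : e != 1 by have := hej 1%N isT isT; rewrite expr1.
    have h : (e - 1) * (e ^+ 2 + e + 1) = 0.
      have -> : (e - 1) * (e ^+ 2 + e + 1) = e ^+ 3 - 1 by ring.
      by rewrite he3 subrr.
    move/eqP: h; rewrite mulf_eq0 subr_eq0 (negbTE ne1) /= => /eqP h'.
    have he0 : e ^+ 2 = - e - 1 by apply/eqP; rewrite -subr_eq0; apply/eqP; rewrite -h'; ring.
    exact: (caseK hb he0 hA hGp hK hsd).
- move=> N N1 [Gp [K [[e [hA he2 hej hGp]] hK hsd]]].
  have ne1 : e != 1 by have := hej 1%N isT isT; rewrite expr1.
  exact: (caseN hb N1 hA he2 ne1 hGp hK hsd).
Qed.
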